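(* Let $C_t\subseteq\mathbb{R}^d$ be closed convex sets and $\ell_t$ convex losses with subgradient selections $g_t$, each $\ell_t$ being $L$-Lipschitz. Then the iterates of lazy gradient descent with constant delay $D\ge0$ and learning rate $\eta>0$ satisfy, for every $T\ge1$, $$\Bigg\|\frac1T\sum_{t=1}^Tg_t(\theta_t)\Bigg\|_2\le\frac{\|\tilde\theta_1\|_2+\|\tilde\theta_{T+1}\|_2}{\eta T}+\frac{DL}{T}.$$
   Context: Lazy gradient descent with constant delay $D\ge0$: starting from $\tilde\theta_1$, for $t=1,2,\dots$ set $\theta_t=\Pi_{C_t}(\tilde\theta_t)$ (Euclidean projection) and $\tilde\theta_{t+1}=\tilde\theta_t-\eta g_{t-D}(\theta_{t-D})$, where $g_s(\theta_s):=\mathbf{0}$ for $s\le0$. $\ell$ is $L$-Lipschitz if all its subgradients $g$ satisfy $\|g(\theta)\|_2\le L$ for all $\theta$. *)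

(* Defs.v *)
From HB Require Import structures.
From mathcomp Require Import all_boot all_order all_algebra.
From mathcomp Require Import all_classical all_reals all_analysis.
Set Implicit Arguments. Unset Strict Implicit. Unset Printing Implicit Defensive.
Import Order.TTheory GRing.Theory Num.Theory.
Import numFieldNormedType.Exports.
Local Open Scope ring_scope.
Local Open Scope classical_set_scope.

Definition dotv {R : realType} {d : nat} (u v : 'rV[R]_d) : R :=
  \sum_(i < d) u ord0 i * v ord0 i.

Definition enorm {R : realType} {d : nat} (v : 'rV[R]_d) : R :=
  Num.sqrt (dotv v v).

Definition subgradient_selection {R : realType} {d : nat}
  (f : 'rV[R]_d -> R) (g : 'rV[R]_d -> 'rV[R]_d) : Prop :=
  forall x y, f x + dotv (g x) (y - x) <= f y.

(* the loss is L-Lipschitz in the paper's sense: all its subgradients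
   (here: the selection) have Euclidean norm at most L *)
Definition lipschitz_subgrad {R : realType} {d : nat}
  (g : 'rV[R]_d -> 'rV[R]_d) (L : R) : Prop :=
  forall x, enorm (g x) <= L.

Definition is_proj {R : realType} {d : nat} (C : set 'rV[R]_d) (y p : 'rV[R]_d)
  : Prop := C p /\ forall x, C x -> enorm (y - p) <= enorm (y - x).

Definition delayed_grad {R : realType} {d : nat} (D : nat)
  (g : nat -> 'rV[R]_d -> 'rV[R]_d) (theta : nat -> 'rV[R]_d) (t : nat)
  : 'rV[R]_d :=
  if (t <= D)%N then 0 else g (t - D)%N (theta (t - D)%N).

Definition lazy_gd_delayed {R : realType} {d : nat} (C : nat -> set 'rV[R]_d)
  (g : nat -> 'rV[R]_d -> 'rV[R]_d) (D : nat) (eta : R)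
  (theta thetat : nat -> 'rV[R]_d) : Prop :=
  forall t : nat, (1 <= t)%N ->
    is_proj (C t) (thetat t) (theta t) /\
    thetat t.+1 = thetat t - eta *: delayed_grad D g theta t.

(* Main.v *)
Require Import Defs.
From HB Require Import structures.
From mathcomp Require Import all_boot all_order all_algebra.
From mathcomp Require Import all_classical all_reals all_analysis.
From mathcomp Require Import ring lra zify.
Import Order.TTheory GRing.Theory Num.Theory.
Import numFieldNormedType.Exports.
Local Open Scope ring_scope.
Local Open Scope classical_set_scope.

Section E.
Context {R : realType} {d : nat}.
Implicit Types u v w : 'rV[R]_d.

Lemma dotv_ge0 v : 0 <= dotv v v.
Proof. by apply: sumr_ge0 => i _; rewrite -expr2 sqr_ge0. Qed.

Lemma enorm_ge0 v : 0 <= enorm v.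
Proof. exact: sqrtr_ge0. Qed.

Lemma enorm_sqr v : enorm v ^+ 2 = dotv v v.
Proof. by rewrite /enorm sqr_sqrtr // dotv_ge0. Qed.

Lemma dotv_quad u v (x y : R) :
  dotv (x *: u + y *: v) (x *: u + y *: v) =
  x^+2 * dotv u u + 2 * x * y * dotv u v + y^+2 * dotv v v.
Proof.
rewrite /dotv !mulr_sumr -!big_split /=; apply: eq_bigr => i _.
rewrite !mxE; ring.
Qed.

Lemma dotv0 u v : dotv u u = 0 -> dotv u v = 0.
Proof.
move=> H; rewrite /dotv big1 // => i _.
have h: u ord0 i * u ord0 i = 0.
  by apply: (psumr_eq0P _ H) => // j _; rewrite -expr2 sqr_ge0.
by move: h => /eqP; rewrite mulf_eq0 orbb => /eqP ->; rewrite mul0r.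
Qed.

Lemma dotvC u v : dotv u v = dotv v u.
Proof. by apply: eq_bigr => i _; rewrite mulrC. Qed.

Lemma cs u v : dotv u v <= enorm u * enorm v.
Proof.
set a := enorm u; set b := enorm v.
have ha : 0 <= a by exact: enorm_ge0.
have hb : 0 <= b by exact: enorm_ge0.
have ea := enorm_sqr u; have eb := enorm_sqr v.
have [a0|apos] := eqVneq a 0.
  rewrite dotv0 ?a0 ?mul0r // -enorm_sqr -/a a0; by rewrite expr0n.
have [b0|bpos] := eqVneq b 0.
  rewrite dotvC dotv0 ?b0 ?mulr0 // -enorm_sqr -/b b0; by rewrite expr0n.
have q := dotv_ge0 (b *: u + (- a) *: v); rewrite dotv_quad -ea -eb in q.
have ab : 0 < a * b by rewrite mulr_gt0 // lt0r ?apos ?bpos.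
have : 0 <= (a * b) * (a * b - dotv u v).
  have -> : (a * b) * (a * b - dotv u v) = (b ^+ 2 * a ^+ 2 + 2 * b * - a * dotv u v + (- a) ^+ 2 * b ^+ 2) / 2 by field.
  by rewrite divr_ge0.
by rewrite pmulr_rge0 // subr_ge0.
Qed.

Lemma enormD u v : enorm (u + v) <= enorm u + enorm v.
Proof.
rewrite -(ler_pXn2r (n:=2)) ?nnegrE ?addr_ge0 ?enorm_ge0 //.
have h := dotv_quad u v 1 1; rewrite !scale1r in h.
rewrite enorm_sqr h sqrrD !enorm_sqr.
have := cs u v; lra.
Qed.

Lemma enormZ (x : R) v : enorm (x *: v) = `|x| * enorm v.
Proof.
have h := dotv_quad v v x 0; rewrite scale0r !addr0 in h.
rewrite /enorm h expr0n /= mul0r addr0 mulr0 mul0r addr0 sqrtrM ?sqr_ge0 //.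
by rewrite sqrtr_sqr.
Qed.

Lemma enormN v : enorm (- v) = enorm v.
Proof. by rewrite -scaleN1r enormZ normrN normr1 mul1r. Qed.

Lemma enorm_sum m n (F : nat -> 'rV[R]_d) :
  enorm (\sum_(m <= i < n) F i) <= \sum_(m <= i < n) enorm (F i).
Proof.
elim/big_ind2: _ => //.
  by rewrite /enorm /dotv big1 ?sqrtr0 // => i _; rewrite mxE mul0r.
move=> x1 x2 y1 y2 h1 h2; apply: le_trans (enormD _ _) _; exact: lerD.
Qed.
End E.

Theorem proposition11 (R : realType) (d : nat)
  (C : nat -> set 'rV[R]_d) (ell : nat -> 'rV[R]_d -> R)
  (g : nat -> 'rV[R]_d -> 'rV[R]_d) (L eta : R) (D : nat)
  (theta thetat : nat -> 'rV[R]_d) :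
  (forall t, closed (C t) /\ convex_set (C t)) ->
  (forall t, convex_function setT (ell t)) ->
  (forall t, subgradient_selection (ell t) (g t)) ->
  (forall t, lipschitz_subgrad (g t) L) ->
  0 < eta ->
  lazy_gd_delayed C g D eta theta thetat ->
  forall T : nat, (1 <= T)%N ->
    enorm (T%:R^-1 *: \sum_(1 <= t < T.+1) g t (theta t))
      <= (enorm (thetat 1%N) + enorm (thetat T.+1)) / (eta * T%:R)
         + D%:R * L / T%:R.
Proof.
move=> _ _ _ hL heta hgd T hT.
have L0 : 0 <= L := le_trans (enorm_ge0 (g 0%N 0)) (hL 0%N 0).
set dg := delayed_grad D g theta.
have Hth : forall n, thetat n.+1 = thetat 1%N - eta *: \sum_(1 <= t < n.+1) dg t.
  elim => [|n IH]; first by rewrite big_geq // scaler0 subr0.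
  rewrite (proj2 (hgd n.+1 isT)) IH [in RHS]big_nat_recr //= scalerDr opprD addrA.
  by [].
have Hdg : forall n, \sum_(1 <= t < n.+1) dg t = \sum_(1 <= s < (n - D).+1) g s (theta s).
  elim => [|n IH]; first by rewrite sub0n !big_geq.
  rewrite big_nat_recr //= IH /dg /delayed_grad.
  case: leqP => h.
    have -> : (n.+1 - D = (n - D).+1)%N by lia.
    by rewrite [RHS]big_nat_recr.
  have -> : (n.+1 - D = n - D)%N by lia.
  by rewrite addr0.
set m := (T - D)%N.
rewrite (@big_cat_nat _ _ _ m.+1) //=; last by lia.
rewrite -Hdg.
have -> : \sum_(1 <= t < T.+1) dg t = eta^-1 *: (thetat 1%N - thetat T.+1).
  by rewrite (Hth T) opprB addrC subrK scalerA mulVf ?scale1r // gt_eqF.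
set S2 := \sum_(m.+1 <= i < T.+1) g i (theta i).
have hS2 : enorm S2 <= D%:R * L.
  apply: le_trans (enorm_sum _ _ _) _.
  apply: le_trans (ler_sum_nat (G := fun _ => L) _) _ => [i _|]; first exact: hL.
  rewrite sumr_const_nat -[L *+ _]mulr_natl; apply: (ler_wpM2r L0).
  rewrite ler_nat; lia.
have hT0 : 0 < T%:R :> R by rewrite ltr0n.
have hTi : 0 <= T%:R^-1 :> R by rewrite invr_ge0 ltW.
rewrite enormZ ger0_norm //.
have -> : (enorm (thetat 1%N) + enorm (thetat T.+1)) / (eta * T%:R) + D%:R * L / T%:R
  = T%:R^-1 * (eta^-1 * (enorm (thetat 1%N) + enorm (thetat T.+1)) + D%:R * L).
  by field; rewrite ?gt_eqF.
apply: (ler_wpM2l hTi).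
apply: le_trans (enormD _ _) _; apply: lerD => //.
have hei : 0 <= eta^-1 by rewrite invr_ge0 ltW.
rewrite enormZ ger0_norm //; apply: (ler_wpM2l hei).
by apply: le_trans (enormD _ _) _; rewrite enormN.
Qed.
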